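(* Let $R>0$ and let $E\subset\mathbb{R}^d$ be an $R$-supported body. Then $$co_R(E)=E_R\cap\Big(\bigcap_{a\in\partial E}C^a_{\mathcal{N}_R(E,a)}\Big).$$
   Context: A body is a nonempty closed subset of $\mathbb{R}^d$; $S^{d-1}$ is the unit sphere; $B(x)=\{y:|y-x|<R\}$. $E_R=\{x:\operatorname{dist}(x,E)<R\}$. The $R$-hulloid is $co_R(E)=\bigcap\{\mathbb{R}^d\setminus B : B \text{ an open ball of radius } R,\ B\cap E=\emptyset\}$ (equal to $\mathbb{R}^d$ if no such ball exists). For a body $A$ and $a\in\partial A$, $\mathcal{N}_R(A,a)=\{v\in S^{d-1}: A\cap B(a+Rv)=\emptyset\}$; $A$ is $R$-supported if $\mathcal{N}_R(A,a)\ne\emptyset$ for all $a\in\partial A$. For nonempty closed $\mathcal K\subset S^{d-1}$ and $x\in\mathbb{R}^d$, $C^x_{\mathcal K}=\bigcap_{v\in\mathcal K}(\mathbb{R}^d\setminus B(x+Rv))$. An intersection over an empty index set is $\mathbb{R}^d$. *)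

(* Defs.v *)
(* R^d is modelled as row vectors 'rV[R]_d over R : realType,
   with the (product = Euclidean) topology of the library, and the Euclidean norm below. *)
From mathcomp Require Import all_boot all_order all_algebra.
From mathcomp Require Import all_classical all_reals all_analysis.
Set Implicit Arguments. Unset Strict Implicit. Unset Printing Implicit Defensive.
Import Order.TTheory GRing.Theory Num.Theory.
Import numFieldNormedType.Exports.
Local Open Scope classical_set_scope.
Local Open Scope ring_scope.

Section Defs.
Variables (R : realType) (d : nat).
Notation V := 'rV[R]_d.

Definition enorm (x : V) : R := Num.sqrt (\sum_(i < d) (x ord0 i) ^+ 2).

Definition oball (r : R) (x : V) : set V := [set y | enorm (y - x) < r].

Definition sphere : set V := [set v | enorm v = 1].

Definition body (E : set V) : Prop := closed E /\ E !=set0.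

Definition bdry (E : set V) : set V := closure E `\` interior E.

Definition dist (x : V) (E : set V) : R := inf [set enorm (x - y) | y in E].

Definition Rnbhd (r : R) (E : set V) : set V := [set x | dist x E < r].

Definition hulloid (r : R) (E : set V) : set V :=
  \bigcap_(c in [set c | oball r c `&` E = set0]) ~` oball r c.

Definition NR (r : R) (A : set V) (a : V) : set V :=
  [set v | sphere v /\ A `&` oball r (a + r *: v) = set0].

Definition R_supported (r : R) (A : set V) : Prop :=
  forall a, bdry A a -> NR r A a !=set0.

Definition Ccone (r : R) (K : set V) (x : V) : set V :=
  \bigcap_(v in K) ~` oball r (x + r *: v).

End Defs.

(* Main.v *)
Require Import Defs.
From mathcomp Require Import all_boot all_order all_algebra.
From mathcomp Require Import all_classical all_reals all_analysis.
From mathcomp Require Import ring lra.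
Import Order.TTheory GRing.Theory Num.Theory.
Import numFieldNormedType.Exports.
Local Open Scope classical_set_scope.
Local Open Scope ring_scope.

Section Aux.
Variables (R : realType) (d : nat).
Notation V := 'rV[R]_d.

Lemma CS (a b : 'I_d -> R) :
  (\sum_i a i * b i) ^+ 2 <= (\sum_i a i ^+ 2) * (\sum_i b i ^+ 2).
Proof.
set A := \sum_i a i ^+ 2; set B := \sum_i b i ^+ 2; set C := \sum_i a i * b i.
have A0 : 0 <= A by apply: sumr_ge0 => i _; exact: sqr_ge0.
have H : \sum_i (A * b i - C * a i) ^+ 2 = A * (A * B - C ^+ 2).
  rewrite (eq_bigr (fun i => A ^+ 2 * b i ^+ 2 - (2 * A * C) * (a i * b i)
              + C ^+ 2 * a i ^+ 2)); last by move=> i _; ring.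
  rewrite !big_split /= sumrN -!mulr_sumr -/A -/B -/C; ring.
have H0 : 0 <= A * (A * B - C ^+ 2).
  by rewrite -H; apply: sumr_ge0 => i _; exact: sqr_ge0.
have [Az|Ap] := eqVneq A 0.
  have ai : forall i, a i = 0.
    move=> i; apply/eqP; rewrite -sqrf_eq0; apply/eqP.
    by move: Az => /eqP; rewrite psumr_eq0 => [/allP /(_ i) /=|j _]; 
      [rewrite mem_index_enum => /(_ isT) /eqP|exact: sqr_ge0].
  rewrite /C (eq_bigr (fun=> 0)) ?big1 // ?expr0n /= ?mulr_ge0 //.
  - by apply: sumr_ge0 => i _; exact: sqr_ge0.
  - by move=> i _; rewrite ai mul0r.
have Apos : 0 < A by rewrite lt_neqAle eq_sym Ap A0.
by move: H0; rewrite pmulr_rge0 // subr_ge0.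
Qed.

Definition en (x : V) := Num.sqrt (\sum_(i < d) (x ord0 i) ^+ 2).
Lemma enE (x : V) : enorm x = en x. Proof. by []. Qed.

Lemma enorm_ge0 (x : V) : 0 <= enorm x. Proof. exact: sqrtr_ge0. Qed.

Lemma enorm0 : enorm (0 : V) = 0.
Proof. by rewrite /enorm big1 ?sqrtr0 // => i _; rewrite mxE expr0n. Qed.

Lemma enormZ k (x : V) : enorm (k *: x) = `|k| * enorm x.
Proof.
rewrite /enorm (eq_bigr (fun i => k ^+ 2 * x ord0 i ^+ 2)); last first.
  by move=> i _; rewrite mxE exprMn.
by rewrite -mulr_sumr sqrtrM ?sqr_ge0 // sqrtr_sqr.
Qed.

Lemma enormN (x : V) : enorm (- x) = enorm x.
Proof. by rewrite -scaleN1r enormZ normrN normr1 mul1r. Qed.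

Lemma enormB (x y : V) : enorm (x - y) = enorm (y - x).
Proof. by rewrite -enormN opprB. Qed.

Lemma enormD (x y : V) : enorm (x + y) <= enorm x + enorm y.
Proof.
rewrite /enorm.
set A := \sum_i x ord0 i ^+ 2; set B := \sum_i y ord0 i ^+ 2.
set C := \sum_i x ord0 i * y ord0 i.
have A0 : 0 <= A by apply: sumr_ge0 => i _; exact: sqr_ge0.
have B0 : 0 <= B by apply: sumr_ge0 => i _; exact: sqr_ge0.
have -> : \sum_i (x + y) ord0 i ^+ 2 = A + C *+ 2 + B.
  rewrite (eq_bigr (fun i => x ord0 i ^+ 2 + (x ord0 i * y ord0 i) *+ 2 + y ord0 i ^+ 2)).
    by rewrite !big_split /=.
  by move=> i _; rewrite mxE sqrrD.
have CS' : C <= Num.sqrt A * Num.sqrt B.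
  rewrite -sqrtrM // (le_trans (ler_norm C)) // -sqrtr_sqr ler_sqrt ?mulr_ge0 //.
  exact: CS.
rewrite -[X in _ <= X]ger0_norm ?addr_ge0 ?sqrtr_ge0 // -sqrtr_sqr ler_sqrt ?sqr_ge0 //.
rewrite sqrrD !sqr_sqrtr //.
rewrite !mulr2n; lra.
Qed.


Lemma coord_le_norm (x : V) i : `|x ord0 i| <= `|x|.
Proof.
rewrite -[leRHS]/(mx_norm x) mx_normrE; apply/bigmax_geP; right => /=.
by exists (ord0, i).
Qed.

Lemma coord_le_enorm (x : V) i : `|x ord0 i| <= enorm x.
Proof.
rewrite /enorm -sqrtr_sqr ler_sqrt; last by apply: sumr_ge0 => j _; exact: sqr_ge0.
rewrite (bigD1 i) //= lerDl; apply: sumr_ge0 => j _; exact: sqr_ge0.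
Qed.

Lemma norm_le_enorm (x : V) : `|x| <= enorm x.
Proof.
rewrite -[leLHS]/(mx_norm x) mx_normrE; apply/bigmax_leP; split.
  exact: enorm_ge0.
by move=> [a b] _ /=; rewrite (ord1 a); exact: coord_le_enorm.
Qed.

Lemma enorm_le_norm (x : V) : enorm x <= Num.sqrt d%:R * `|x|.
Proof.
rewrite /enorm -(ger0_norm (normr_ge0 x)) -sqrtr_sqr -sqrtrM ?ler0n //.
rewrite ler_sqrt ?mulr_ge0 ?ler0n ?sqr_ge0 //.
apply: (@le_trans _ _ (\sum_(i < d) `|x| ^+ 2)).
  apply: ler_sum => i _; rewrite -real_normK ?num_real //.
  by rewrite lerXn2r ?nnegrE ?normr_ge0 ?coord_le_norm.
by rewrite sumr_const card_ord mulr_natl.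
Qed.

Lemma enorm_cont (c : V) : continuous (fun y : V => enorm (y - c)).
Proof.
move=> x; apply/(@cvgrPdist_lt _ _ _ (nbhs x) (nbhs_filter x)) => e e0.
set s := Num.sqrt (d%:R : R).
have s0 : 0 <= s by exact: sqrtr_ge0.
have k0 : 0 < e / (s + 1) by rewrite divr_gt0 // ltr_wpDl.
near=> y.
have H : `|x - y| < e / (s + 1).
  near: y; apply: (@cvgr_dist_lt _ _ _ (nbhs x) (nbhs_filter x) id x); [exact: cvg_id|exact: k0].
have H1 : (s + 1) * `|x - y| < e by rewrite -ltr_pdivlMl ?ltr_wpDl // mulrC.
have H2 := enorm_le_norm (x - y).
have H3 := normr_ge0 (x - y).
have T1 : enorm (x - c) <= enorm (x - y) + enorm (y - c).
  by have := enormD (x - y) (y - c); rewrite addrA subrK.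
have T2 : enorm (y - c) <= enorm (y - x) + enorm (x - c).
  by have := enormD (y - x) (x - c); rewrite addrA subrK.
rewrite (enormB y x) in T2.
have H4 : enorm (x - y) < e.
  apply: le_lt_trans H2 _; apply: le_lt_trans _ H1; by rewrite -/s ler_wpM2r // lerDl ler01.
rewrite ltr_norml; apply/andP; split; lra.
Unshelve. all: by end_near.
Qed.

Lemma setI0P (A B : set V) : A `&` B = set0 -> forall y, A y -> B y -> False.
Proof. by move=> H y Ay By; have : (A `&` B) y by []; rewrite H. Qed.

Lemma dist_lb (x : V) (E : set V) : has_lbound [set enorm (x - y) | y in E].
Proof. by exists 0 => _ [y _ <-]; exact: enorm_ge0. Qed.

Lemma dist_le (x : V) (E : set V) y : E y -> dist x E <= enorm (x - y).
Proof. by move=> Ey; apply: (ge_inf (dist_lb x E)); exists y. Qed.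

Lemma dist_lt (x : V) (E : set V) r : E !=set0 -> dist x E < r ->
  exists2 y, E y & enorm (x - y) < r.
Proof.
move=> [e0 Ee0] H.
have hi : has_inf [set enorm (x - y) | y in E].
  by split; [exists (enorm (x - e0)), e0 | exact: dist_lb].
have hp : 0 < r - dist x E by rewrite subr_gt0.
have [_ [y Ey <-]] := inf_adherent hp hi.
rewrite [_ + (r - _)]addrC subrK => ?; by exists y.
Qed.

Lemma key (r : R) (E : set V) (x c : V) : 0 < r -> closed E -> E !=set0 ->
  dist x E < r -> oball r c `&` E = set0 -> enorm (x - c) < r ->
  exists a v, bdry E a /\ NR r E a v /\ oball r (a + r *: v) x.
Proof.
move=> r0 clE neE dxE Hc xc.
have [e Ee xe] := @dist_lt x E r neE dxE.
set w := x - c.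
pose ct t : V := c + t *: w.
set L := enorm w.
have L0 : 0 <= L by exact: enorm_ge0.
have cdiff t s : ct t - ct s = (t - s) *: w.
  by rewrite /ct scalerBl opprD addrACA subrr add0r.
have tri y t s : enorm (y - ct t) <= enorm (y - ct s) + `|t - s| * L.
  have := enormD (y - ct s) (ct s - ct t); rewrite addrA subrK cdiff enormZ.
  by rewrite distrC.
pose S := [set t : R | 0 <= t <= 1 /\ forall y, E y -> r <= enorm (y - ct t)].
have S0 : S 0.
  split; first by rewrite lexx ler01.
  move=> y Ey; rewrite /ct scale0r addr0 leNgt; apply/negP => H.
  exact: (@setI0P _ _ Hc y H Ey).
have hS : has_sup S by split; [exists 0 | exists 1 => t [/andP[_ ?] _]].
set T := sup S.
have T0 : 0 <= T by exact: (sup_upper_bound hS).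
have T1 : T <= 1 by apply: ge_sup; [exists 0 | move=> t [/andP[_ ?] _]].
have claimA : forall y, E y -> r <= enorm (y - ct T).
  move=> y Ey; rewrite leNgt; apply/negP => H.
  set dl := r - enorm (y - ct T).
  have dl0 : 0 < dl by rewrite subr_gt0.
  have ep : 0 < dl / (L + 1) by rewrite divr_gt0 // ltr_wpDl.
  have [s Ss Hs] := sup_adherent ep hS.
  have sT : s <= T by exact: (sup_upper_bound hS).
  have Hs' : (T - s) * (L + 1) < dl.
    by rewrite -ltr_pdivlMr ?ltr_wpDl //; rewrite -/T in Hs; lra.
  have := tri y s T; rewrite distrC ger0_norm ?subr_ge0 // => H2.
  have H3 : (T - s) * L <= (T - s) * (L + 1) by rewrite ler_wpM2l ?subr_ge0 ?lerDl.
  rewrite /dl in Hs'; have := Ss.2 y Ey; lra.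
have ct1 : ct 1 = x by rewrite /ct scale1r /w addrC subrK.
have TL1 : T < 1.
  rewrite lt_neqAle T1 andbT; apply/negP => /eqP TE.
  have := claimA e Ee; rewrite TE ct1 enormB; lra.
have claimB : forall eps, 0 < eps -> exists2 y, E y & enorm (y - ct T) < r + eps.
  move=> eps eps0.
  have ep : 0 < eps / (L + 1) by rewrite divr_gt0 // ltr_wpDl.
  pose eta := Num.min (1 - T) (eps / (L + 1)).
  have eta0 : 0 < eta by rewrite lt_min subr_gt0 TL1 ep.
  have eta1 : eta <= 1 - T by rewrite ge_min lexx.
  have eta2 : eta <= eps / (L + 1) by rewrite ge_min lexx orbT.
  have eta3 : eta * (L + 1) <= eps by rewrite -ler_pdivlMr ?ltr_wpDl.
  have nS : ~ S (T + eta).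
    by move=> /(sup_upper_bound hS); rewrite -/T; lra.
  have : ~ (forall y, E y -> r <= enorm (y - ct (T + eta))).
    move=> H; apply: nS; split => //; apply/andP; split; lra.
  move=> /existsNP [y /not_implyP [Ey /negP]]; rewrite -ltNge => Hy.
  exists y => //.
  have := tri y T (T + eta).
  have -> : `|T - (T + eta)| = eta by rewrite opprD addrA subrr add0r normrN ger0_norm ?ltW.
  have H3 : eta * L <= eta * (L + 1) by apply: ler_wpM2l; [exact: ltW | rewrite lerDl].
  lra.
pose f := fun y : V => enorm (y - ct T).
pose K := E `&` [set y | f y <= r + 1].
have Kne : K !=set0.
  have [y Ey Hy] := claimB 1 ltr01; exists y; split => //; exact: ltW.
have clK : closed K.
  apply: closedI => //; apply: (preimage_closed (D := [set z | z <= r + 1])).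
    by move=> z _; exact: enorm_cont.
  exact: closed_le.
have bK : bounded_set K.
  exists (r + 1 + enorm (ct T)); split; first exact: num_real.
  move=> M HM y [_ Ky] /=.
  apply: le_trans (norm_le_enorm y) _.
  have := enormD (y - ct T) (ct T); rewrite subrK /f in Ky * => H.
  move: Ky => /= Ky; lra.
have cK := bounded_closed_compact bK clK.
have [a aK amin] := @EVT_min_rV _ _ f K Kne cK (continuous_subspaceT (enorm_cont (ct T))).
move: aK; rewrite inE => -[Ea Ka].
have far : f a = r.
  apply/eqP; rewrite eq_le claimA // andbT leNgt; apply/negP => Hlt.
  pose eps := Num.min (f a - r) 1.
  have eps0 : 0 < eps by rewrite lt_min subr_gt0 Hlt ltr01.
  have e1 : eps <= f a - r by rewrite ge_min lexx.
  have e2 : eps <= 1 by rewrite ge_min lexx orbT.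
  have [y Ey Hy] := claimB eps eps0.
  have Ky : K y by split => //=; rewrite /f; lra.
  have := amin y; rewrite inE => /(_ Ky); rewrite /f in Hy e1 *; lra.
set p := ct T.
have far' : enorm (p - a) = r by rewrite -enormB.
set u := p - a.
have bd : bdry E a.
  split; first exact: subset_closure.
  move=> /nbhs_ballP [dl dl0 Hb].
  set nu := `|u|.
  have nu0 : 0 <= nu by exact: normr_ge0.
  have q0 : 0 < dl / (nu + 1) by rewrite divr_gt0 // ltr_wpDl.
  pose th := Num.min (2^-1) (dl / (nu + 1)).
  have th0 : 0 < th by rewrite lt_min q0 invr_gt0 ltr0n.
  have th1 : th <= 2^-1 by rewrite ge_min lexx.
  have th2 : th <= dl / (nu + 1) by rewrite ge_min lexx orbT.
  have th3 : th * (nu + 1) <= dl by rewrite -ler_pdivlMr ?ltr_wpDl.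
  have Eq : E (a + th *: u).
    apply: Hb; rewrite -ball_normE /ball_ /=.
    rewrite opprD addrA subrr add0r normrN normrZ ger0_norm ?ltW //.
    have : th * nu < th * (nu + 1) by rewrite ltr_pM2l // ltrDl ltr01.
    by move=> h; exact: lt_le_trans h th3.
  have := claimA _ Eq.
  have -> : a + th *: u - p = (th - 1) *: u.
    by rewrite scalerBl scale1r /u opprB addrAC addrC.
  rewrite enormZ far' distrC ger0_norm; last by rewrite subr_ge0; lra.
  nra.
pose v := r^-1 *: u.
have cen : a + r *: v = p.
  by rewrite /v scalerA mulfV ?gt_eqF // scale1r /u addrC subrK.
have vNR : NR r E a v.
  split.
    by rewrite /sphere /= /v enormZ far' ger0_norm ?invr_ge0 ?ltW // mulVf ?gt_eqF.
  apply/seteqP; split => // y [Ey Hy]; move: Hy; rewrite cen /oball /=.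
  have := claimA y Ey; lra.
exists a, v; split => //; split => //.
rewrite cen /oball /=.
have -> : x - p = (1 - T) *: w.
  by rewrite /p /ct /w scalerBl scale1r opprD addrA.
rewrite enormZ ger0_norm ?subr_ge0 //.
have : L < r by [].
nra.
Qed.
End Aux.

Theorem mainTheorem12 (R : realType) (d : nat) (r : R) (E : set 'rV[R]_d) :
  0 < r -> body E -> R_supported r E ->
  hulloid r E = Rnbhd r E `&` \bigcap_(a in bdry E) Ccone r (NR r E a) a.
Proof.
move=> r0 [clE neE] _.
apply/seteqP; split => x.
- move=> Hx; split.
  + rewrite /Rnbhd /= ltNge; apply/negP => H.
    have Hb : oball r x `&` E = set0.
      apply/seteqP; split => // y [Hy Ey].
      have := @dist_le R d x E y Ey; move: Hy; rewrite /oball /= enormB; lra.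
    have := Hx x Hb; apply; rewrite /oball /= subrr enorm0; exact: r0.
  + move=> a Ba v Nv; apply: Hx; rewrite /= setIC; exact: Nv.2.
- move=> [Hd Hc] c Hc0 /= Hxc.
  have [a [v [Ba [Nv Ho]]]] := @key R d r E x c r0 clE neE Hd Hc0 Hxc.
  exact: (Hc a Ba v Nv Ho).
Qed.
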